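(* In the setting below (planted submatrix signal), if the multigraph $\alpha\in\mathbb{N}^{N}$ has a connected component containing at least one edge that does not contain vertex $1$, then $\kappa_\alpha=0$. In particular $\kappa_\alpha=0$ whenever $\alpha$ is disconnected.
   Context: Let $n\ge1$, $\lambda\ge0$, $\rho\in(0,1)$, $v\in\{0,1\}^n$ with i.i.d. $\mathrm{Bernoulli}(\rho)$ entries, $N=n(n+1)/2$ indexed by pairs $(i,j)$ with $1\le i\le j\le n$, $X_{ij}=\lambda v_iv_j$, and $x=v_1$. An index $\alpha=(\alpha_{ij})_{i\le j}\in\mathbb{N}^N$ is viewed as a multigraph on vertex set $[n]$ (self-loops allowed) with $\alpha_{ij}$ edges between $i$ and $j$; $|\alpha|$ is its number of edges and $V(\alpha)$ the set of vertices spanned by its edges. $\kappa_\alpha$ is defined recursively by $\kappa_\alpha=\mathbb{E}[xX^\alpha]-\sum_{0\le\beta\lneq\alpha}\kappa_\beta\binom{\alpha}{\beta}\mathbb{E}[X^{\alpha-\beta}]$, with multi-index notation $X^\alpha=\prod X_{ij}^{\alpha_{ij}}$, $\binom{\alpha}{\beta}=\prod\binom{\alpha_{ij}}{\beta_{ij}}$, $\beta\le\alpha$ entrywise, $\beta\lneq\alpha$ meaning $\beta\le\alpha$, $\beta\ne\alpha$. *)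

(* Defs.v *)
From HB Require Import structures.
From mathcomp Require Import all_boot all_order all_algebra.
Set Implicit Arguments. Unset Strict Implicit. Unset Printing Implicit Defensive.
Import Order.TTheory GRing.Theory Num.Theory.
Local Open Scope ring_scope.

(* Index set of the N = n(n+1)/2 entries: pairs (i,j) of vertices with i <= j. *)
Definition pairs (n : nat) := {p : 'I_n * 'I_n | (p.1 <= p.2)%N}.

(* Multi-indices alpha in N^N (multigraphs on [n] with self-loops). *)
Definition midx (n : nat) := {ffun pairs n -> nat}.

Definition msize n (a : midx n) : nat := (\sum_(p : pairs n) a p)%N.

Definition mle n (b a : midx n) : bool := [forall p, (b p <= a p)%N].
Definition msub n (a b : midx n) : midx n := [ffun p => (a p - b p)%N].

Section Model.
Variables (R : realFieldType) (n : nat) (lambda rho : R).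

Definition bern_weight (v : {ffun 'I_n -> bool}) : R :=
  \prod_(i < n) (if v i then rho else 1 - rho).
Definition Expect (f : {ffun 'I_n -> bool} -> R) : R :=
  \sum_(v : {ffun 'I_n -> bool}) bern_weight v * f v.

Definition Xent (v : {ffun 'I_n -> bool}) (p : pairs n) : R :=
  lambda * (v (val p).1)%:R * (v (val p).2)%:R.
Definition Xpow (v : {ffun 'I_n -> bool}) (a : midx n) : R :=
  \prod_(p : pairs n) Xent v p ^+ a p.
Definition mbinom (a b : midx n) : R := \prod_(p : pairs n) ('C(a p, b p))%:R.

Variable one : 'I_n. (* the distinguished vertex 1; x = v_1 *)

(* kappa, by recursion with fuel; beta ranges over all beta <= alpha, beta != alpha,
   enumerated via ffuns bounded by |alpha| (each such beta appears exactly once). *)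
Fixpoint kappa_fuel (k : nat) (a : midx n) : R :=
  match k with
  | 0 => 0
  | k'.+1 =>
      Expect (fun v => (v one)%:R * Xpow v a)
      - \sum_(c : {ffun pairs n -> 'I_(msize a).+1}
               | mle [ffun p => val (c p)] a && ([ffun p => val (c p)] != a))
          kappa_fuel k' [ffun p => val (c p)]
          * mbinom a [ffun p => val (c p)]
          * Expect (fun v => Xpow v (msub a [ffun p => val (c p)]))
  end.

Definition kappa (a : midx n) : R := kappa_fuel (msize a).+1 a.
End Model.

Definition madj n (a : midx n) : rel 'I_n := fun i j =>
  [exists p : pairs n, (0 < a p)%N &&
     ((((val p).1 == i) && ((val p).2 == j)) || (((val p).1 == j) && ((val p).2 == i)))].

(* Main.v *)
Require Import Defs.
From HB Require Import structures.
From mathcomp Require Import all_boot all_order all_algebra.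
Set Implicit Arguments. Unset Strict Implicit. Unset Printing Implicit Defensive.
Import Order.TTheory GRing.Theory Num.Theory.
Local Open Scope ring_scope.
Lemma msize_lt n (b a : midx n) : mle b a -> b != a -> (msize b < msize a)%N.
Proof.
move=> /forallP le neq.
have [p hp] : exists p, (b p < a p)%N.
  apply/existsP; apply: contraNT neq => /existsPn H; apply/eqP/ffunP => p.
  by apply/eqP; rewrite eqn_leq le leqNgt H.
rewrite /msize (bigD1 p) //= [X in (_ < X)%N](bigD1 p) //=.
by rewrite -addSn leq_add // leq_sum.
Qed.

Lemma kappa_fuelE (R : realFieldType) n (l r : R) (one : 'I_n) k (b : midx n) :
  (msize b < k)%N -> kappa_fuel l r one k b = kappa l r one b.
Proof.
elim: k {-2}k (leqnn k) b => [|K IH] k hk b hb.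
  by move: hk hb; rewrite leqn0 => /eqP ->.
case: k hk hb => [//|k] hk hb.
rewrite /kappa /=; congr (_ - _); apply: eq_bigr => c /andP[h1 h2].
have hl := msize_lt h1 h2.
rewrite IH ?(leq_trans hl) //.
by rewrite (IH (msize b)) // -ltnS (leq_trans hb hk).
Qed.

Definition fv n m (c : {ffun pairs n -> 'I_m}) : midx n := [ffun p => val (c p)].

Lemma kappa_rec (R : realFieldType) n (l r : R) (one : 'I_n) (a : midx n) :
  kappa l r one a = Expect r (fun v => (v one)%:R * Xpow l v a)
   - \sum_(c : {ffun pairs n -> 'I_(msize a).+1} | mle (fv c) a && (fv c != a))
        kappa l r one (fv c) * mbinom R a (fv c) * Expect r (fun v => Xpow l v (msub a (fv c))).
Proof.
rewrite {1}/kappa /=; congr (_ - _); apply: eq_bigr => c /andP[h1 h2].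
by rewrite kappa_fuelE // msize_lt.
Qed.

Lemma prod_bool (R : realFieldType) (I : finType) (P : pred I) :
  \prod_(i : I) (P i)%:R = ([forall i, P i])%:R :> R.
Proof.
case: (boolP [forall i, P i]) => [/forallP H | /forallPn [i Hi]].
  by rewrite big1 // => i _; rewrite H.
by rewrite (bigD1 i) //= (negbTE Hi) mul0r.
Qed.

Definition Vset n (a : midx n) : {set 'I_n} :=
  [set i | [exists p : pairs n, (0 < a p)%N && (((val p).1 == i) || ((val p).2 == i))]].

Lemma Xpow_E (R : realFieldType) n (l : R) v (a : midx n) :
  Xpow l v a = l ^+ msize a * ([forall i in Vset a, v i])%:R.
Proof.
rewrite /Xpow /Xent.
under eq_bigr => p _ do rewrite -mulrA exprMn.
rewrite big_split /= prodrXr; congr (_ * _).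
rewrite (eq_bigr (fun p => ((0 < a p)%N ==> v (val p).1 && v (val p).2)%:R)); last first.
  move=> p _; case: (a p) => [|k] //=.
  by rewrite -natrM; case: (v _); case: (v _); rewrite ?expr1n ?expr0n.
rewrite prod_bool; congr ((nat_of_bool _)%:R); apply/idP/idP.
  move=> /forallP H; apply/forallP => i; apply/implyP; rewrite inE => /existsP[p /andP[hp he]].
  move: (H p); rewrite hp /= => /andP[h1 h2].
  by case/orP: he => /eqP <-.
move=> /forallP H; apply/forallP => p; apply/implyP => hp.
have h1 := H (val p).1; have h2 := H (val p).2.
rewrite !inE in h1 h2.
rewrite (implyP h1) ?(implyP h2) //; apply/existsP; exists p; by rewrite hp eqxx ?orbT.
Qed.

Lemma Eall (R : realFieldType) n (r : R) (A : {set 'I_n}) :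
  Expect r (fun v => ([forall i in A, v i])%:R) = r ^+ #|A|.
Proof.
rewrite /Expect.
under eq_bigr => v _.
  rewrite -(prod_bool R (fun i => (i \in A) ==> v i)) /bern_weight -big_split /=.
  over.
rewrite /= -(bigA_distr_bigA (fun i b => (if b then r else 1 - r) * ((i \in A) ==> b)%:R)) /=.
rewrite -prodr_const [RHS]big_mkcond /=; apply: eq_bigr => i _.
rewrite big_bool /=; case: (i \in A) => /=.
  by rewrite mulr1 mulr0 addr0.
by rewrite !mulr1 addrC subrK.
Qed.

Definition madd n (g1 g2 : midx n) : midx n := [ffun p => (g1 p + g2 p)%N].

Lemma msizeD n (g1 g2 : midx n) : msize (madd g1 g2) = (msize g1 + msize g2)%N.
Proof. by rewrite /msize -big_split; apply: eq_bigr => p _; rewrite ffunE. Qed.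

Lemma VsetD n (g1 g2 : midx n) : Vset (madd g1 g2) = Vset g1 :|: Vset g2.
Proof.
apply/setP => i; rewrite !inE; apply/existsP/orP.
  case=> p /andP[]; rewrite ffunE addn_gt0 => /orP[] h e; [left|right];
  by apply/existsP; exists p; rewrite h.
by case=> /existsP[p /andP[h e]]; exists p; rewrite ffunE addn_gt0 h ?orbT.
Qed.

Lemma Expect_scale (R : realFieldType) n (r c : R) (f : {ffun 'I_n -> bool} -> R) :
  Expect r (fun v => c * f v) = c * Expect r f.
Proof. by rewrite /Expect mulr_sumr; apply: eq_bigr => v _; rewrite mulrCA. Qed.

Lemma eq_Expect (R : realFieldType) n (r : R) (f g : {ffun 'I_n -> bool} -> R) :
  (forall v, f v = g v) -> Expect r f = Expect r g.
Proof. by move=> H; apply: eq_bigr => v _; rewrite H. Qed.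

Lemma EX (R : realFieldType) n (l r : R) (g : midx n) :
  Expect r (fun v => Xpow l v g) = l ^+ msize g * r ^+ #|Vset g|.
Proof.
rewrite (@eq_Expect _ _ r _ (fun v => l ^+ msize g * ([forall i in Vset g, v i])%:R)).
  by rewrite Expect_scale Eall.
by move=> v; rewrite Xpow_E.
Qed.

Lemma EXx (R : realFieldType) n (l r : R) (one : 'I_n) (g : midx n) :
  Expect r (fun v => (v one)%:R * Xpow l v g) = l ^+ msize g * r ^+ #|one |: Vset g|.
Proof.
rewrite (@eq_Expect _ _ r _ (fun v => l ^+ msize g * ((v one) && [forall i in Vset g, v i])%:R)); last first.
  by move=> v; rewrite Xpow_E mulrCA; case: (v one); rewrite /= ?mul1r ?mul0r ?mulr0.
rewrite Expect_scale -Eall; congr (_ * _); apply: eq_bigr => v _.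
congr (_ * (nat_of_bool _)%:R).
apply/andP/forallP.
  case=> h1 /forallP h2 i; rewrite !inE; apply/implyP => /orP[/eqP -> //|hi].
  by apply: (implyP (h2 i)); rewrite inE.
move=> H; split; first by apply: (implyP (H one)); rewrite !inE eqxx.
by apply/forallP => i; apply/implyP => hi; apply: (implyP (H i)); by rewrite !inE; rewrite inE in hi; rewrite hi orbT.
Qed.

Lemma disj_card n (A B S : {set 'I_n}) : A \subset S -> B \subset ~: S ->
  #|A :|: B| = (#|A| + #|B|)%N.
Proof.
move=> hA hB; rewrite cardsU.
suff -> : A :&: B = set0 by rewrite cards0 subn0.
apply/setP => i; rewrite !inE; apply/negbTE/negP => /andP[ha hb].
by move: (subsetP hA i ha) (subsetP hB i hb); rewrite inE => ->.
Qed.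

Lemma factorE (R : realFieldType) n (l r : R) (S : {set 'I_n}) (g1 g2 : midx n) :
  Vset g1 \subset S -> Vset g2 \subset ~: S ->
  Expect r (fun v => Xpow l v (madd g1 g2)) =
  Expect r (fun v => Xpow l v g1) * Expect r (fun v => Xpow l v g2).
Proof.
move=> h1 h2; rewrite !EX msizeD VsetD (disj_card h1 h2) !exprD.
by rewrite mulrACA.
Qed.

Lemma factorEx (R : realFieldType) n (l r : R) (one : 'I_n) (S : {set 'I_n}) (g1 g2 : midx n) :
  one \in S -> Vset g1 \subset S -> Vset g2 \subset ~: S ->
  Expect r (fun v => (v one)%:R * Xpow l v (madd g1 g2)) =
  Expect r (fun v => (v one)%:R * Xpow l v g1) * Expect r (fun v => Xpow l v g2).
Proof.
move=> ho h1 h2; rewrite !EXx EX msizeD VsetD setUA.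
have h1' : one |: Vset g1 \subset S by rewrite subUset sub1set ho.
by rewrite (disj_card h1' h2) !exprD mulrACA.
Qed.

Lemma fv_inj n m : injective (@fv n m).
Proof. move=> c1 c2 /ffunP H; apply/ffunP => p; apply: val_inj; move: (H p); by rewrite !ffunE. Qed.

Lemma le_msize n (a : midx n) p : (a p <= msize a)%N.
Proof. by rewrite /msize (bigD1 p) //= leq_addr. Qed.

Lemma mleP n (b a : midx n) : mle b a -> forall p, (b p <= a p)%N.
Proof. by move=> /forallP. Qed.

Definition resz n m k (c : {ffun pairs n -> 'I_m}) : {ffun pairs n -> 'I_k.+1} :=
  [ffun p => inord (val (c p))].

Lemma fv_resz n m k (c : {ffun pairs n -> 'I_m}) :
  (forall p, val (c p) <= k)%N -> fv (resz k c) = fv c.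
Proof. by move=> H; apply/ffunP => p; rewrite !ffunE; apply: inordK; rewrite ltnS. Qed.

Lemma fvE n m (c : {ffun pairs n -> 'I_m}) p : \val (c p) = fv c p.
Proof. by rewrite ffunE. Qed.

Lemma sum_resize (R : realFieldType) n (a : midx n) m (P : pred (midx n)) (F : midx n -> R) :
  (forall p, a p <= m)%N ->
  \sum_(c : {ffun pairs n -> 'I_m.+1} | mle (fv c) a && P (fv c)) F (fv c) =
  \sum_(c : {ffun pairs n -> 'I_(msize a).+1} | mle (fv c) a && P (fv c)) F (fv c).
Proof.
move=> ha.
have bnd : forall k (c : {ffun pairs n -> 'I_k}), mle (fv c) a -> forall p, (\val (c p) <= a p)%N.
  by move=> k c /mleP H p; rewrite fvE.
rewrite (reindex_onto (resz m) (resz (msize a))); last first.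
  move=> i /andP[hi _]; apply: fv_inj.
  have e1 : fv (resz (msize a) i) = fv i.
    by apply: fv_resz => p; exact: leq_trans (bnd _ _ hi p) (le_msize a p).
  rewrite (@fv_resz n (msize a).+1 m (resz (msize a) i)) ?e1 // => p.
  by rewrite fvE e1 -fvE (leq_trans (bnd _ _ hi p) (ha p)).
have key : forall j : {ffun pairs n -> 'I_(msize a).+1},
   mle (fv (resz m j)) a && P (fv (resz m j)) && (resz (msize a) (resz m j) == j) ->
   fv (resz m j) = fv j.
  move=> j /andP[/andP[hm _] /eqP hj].
  rewrite -{2}hj (@fv_resz n m.+1 (msize a) (resz m j)) // => p.
  exact: leq_trans (bnd _ _ hm p) (le_msize a p).
apply: eq_big => [j|j hj]; last by rewrite (key j hj).
apply/idP/idP => [hj|/andP[hm hP]].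
  by rewrite -(key j hj); case/andP: hj.
have e : fv (resz m j) = fv j.
  rewrite (@fv_resz n (msize a).+1 m j) // => p.
  exact: leq_trans (bnd _ _ hm p) (ha p).
rewrite e hm hP /=; apply/eqP/fv_inj.
rewrite (@fv_resz n m.+1 (msize a) (resz m j)) ?e // => p.
by rewrite fvE e -fvE (leq_trans (bnd _ _ hm p)) // le_msize.
Qed.

Definition part1 n (S : {set 'I_n}) (a : midx n) : midx n :=
  [ffun p => if (\val p).1 \in S then a p else 0%N].
Definition part2 n (S : {set 'I_n}) (a : midx n) : midx n :=
  [ffun p => if (\val p).1 \in S then 0%N else a p].

Lemma part_add n S (a : midx n) : a = madd (part1 S a) (part2 S a).
Proof. by apply/ffunP => p; rewrite !ffunE; case: ifP; rewrite ?addn0. Qed.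

Lemma Vset_mono n (g h : midx n) : (forall p, 0 < g p -> 0 < h p)%N -> Vset g \subset Vset h.
Proof.
move=> H; apply/subsetP => i; rewrite !inE => /existsP[p /andP[hp e]].
by apply/existsP; exists p; rewrite H.
Qed.

Definition edgeok n (S : {set 'I_n}) (a : midx n) :=
  forall p, (0 < a p)%N -> ((\val p).1 \in S) = ((\val p).2 \in S).

Lemma part1_sub n S (a : midx n) : edgeok S a -> Vset (part1 S a) \subset S.
Proof.
move=> he; apply/subsetP => i; rewrite inE => /existsP[p /andP[]].
rewrite ffunE; case: ifP => // h1 hp /orP[] /eqP <- //.
by rewrite -(he p hp).
Qed.

Lemma part2_sub n S (a : midx n) : edgeok S a -> Vset (part2 S a) \subset ~: S.
Proof.
move=> he; apply/subsetP => i; rewrite inE => /existsP[p /andP[]].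
rewrite ffunE; case: ifP => // h1 hp /orP[] /eqP <-; rewrite inE ?h1 //.
by rewrite -(he p hp) h1.
Qed.

Lemma msub_part n S (a b : midx n) : mle b (part1 S a) ->
  msub a b = madd (msub (part1 S a) b) (part2 S a).
Proof.
move=> /mleP H; apply/ffunP => p; rewrite !ffunE.
move: (H p); rewrite ffunE; case: ifP => _; first by rewrite addn0.
by rewrite leqn0 => /eqP ->; rewrite !subn0.
Qed.

Lemma mbinom_part (R : realFieldType) n S (a b : midx n) : mle b (part1 S a) ->
  mbinom R a b = mbinom R (part1 S a) b.
Proof.
move=> /mleP H; apply: eq_bigr => p _.
move: (H p); rewrite ffunE; case: ifP => // _.
by rewrite leqn0 => /eqP ->; rewrite !bin0.
Qed.

Lemma msub_ge0 n (a b : midx n) p : (0 < msub a b p)%N -> (0 < a p)%N.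
Proof. rewrite ffunE; case: (a p) => //; by rewrite sub0n. Qed.

Lemma EX0 (R : realFieldType) n (l r : R) (a : midx n) :
  Expect r (fun v => Xpow l v (msub a a)) = 1.
Proof.
rewrite EX.
have -> : msize (msub a a) = 0%N by rewrite /msize big1 // => p _; rewrite ffunE subnn.
suff -> : Vset (msub a a) = set0 by rewrite cards0 !expr0 mulr1.
apply/setP => i; rewrite !inE; apply/negbTE/existsPn => p.
by rewrite ffunE subnn.
Qed.

Lemma mbinom_diag (R : realFieldType) n (a : midx n) : mbinom R a a = 1.
Proof. by rewrite /mbinom big1 // => p _; rewrite binn. Qed.

Lemma main_split (R : realFieldType) n (l r : R) (one : 'I_n) (S : {set 'I_n}) :
  one \in S -> forall a : midx n, edgeok S a ->
  (exists p, (0 < a p)%N && ((\val p).1 \notin S)) -> kappa l r one a = 0.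
Proof.
move=> hS a.
suff H : forall k (a : midx n), (msize a <= k)%N -> edgeok S a ->
  (exists p, (0 < a p)%N && ((\val p).1 \notin S)) -> kappa l r one a = 0.
  exact: H.
elim=> [|k IH] {}a ha he [p0 /andP[hp0 hp0S]].
  by move: (leq_trans (le_msize a p0) ha); rewrite leqn0 => /eqP e; rewrite e in hp0.
set a1 := part1 S a; set a2 := part2 S a.
have a1le : mle a1 a by apply/forallP => p; rewrite ffunE; case: ifP.
rewrite kappa_rec (bigID (fun c => mle (fv c) a1)) /=.
rewrite [X in _ - (_ + X)]big1 ?addr0; last first.
  move=> c /andP[/andP[hle hne] hn1].
  suff -> : kappa l r one (fv c) = 0 by rewrite !mul0r.
  apply: (IH); first by rewrite -ltnS (leq_trans (msize_lt hle hne)).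
    by move=> p hp; apply: he; exact: leq_trans hp (mleP hle p).
  move: hn1 => /forallPn [p]; rewrite -ltnNge => hlt.
  exists p; rewrite (leq_trans _ hlt) //=.
  move: hlt; rewrite ffunE; case: ifP => // hpS hlt.
  by move: (mleP hle p); rewrite leqNgt hlt.
have hp2 : (0 < a2 p0)%N by rewrite ffunE (negbTE hp0S).
have E1 : \sum_(c : {ffun pairs n -> 'I_(msize a).+1} | (mle (fv c) a && (fv c != a)) && mle (fv c) a1)
     kappa l r one (fv c) * mbinom R a (fv c) * Expect r (fun v => Xpow l v (msub a (fv c))) =
   (\sum_(c : {ffun pairs n -> 'I_(msize a).+1} | mle (fv c) a1 && xpredT (fv c))
     kappa l r one (fv c) * mbinom R a1 (fv c) * Expect r (fun v => Xpow l v (msub a1 (fv c))))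
   * Expect r (fun v => Xpow l v a2).
  rewrite mulr_suml; apply: eq_big => c.
    apply/idP/idP => [/andP[_ ->] //|/andP[h _]].
    rewrite h andbT; apply/andP; split.
      by apply/forallP => p; exact: leq_trans (mleP h p) (mleP a1le p).
    apply/eqP => e; move: (mleP h p0); rewrite e ffunE (negbTE hp0S) leqn0 => /eqP e0.
    by rewrite e0 in hp0.
  move=> /andP[/andP[_ _] h].
  rewrite (mbinom_part _ h) (msub_part h) (factorE _ _ (S := S)) ?mulrA //.
    apply: subset_trans (part1_sub he); apply: Vset_mono => p; exact: msub_ge0.
  exact: part2_sub.
rewrite E1 (@sum_resize R n a1 (msize a) xpredT (fun b => kappa l r one b * mbinom R a1 b * Expect r (fun v => Xpow l v (msub a1 b)))); last by move=> p; exact: leq_trans (mleP a1le p) (le_msize a p).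
pose c0 : {ffun pairs n -> 'I_(msize a1).+1} := [ffun p => inord (a1 p)].
have fc0 : fv c0 = a1.
  apply/ffunP => p; rewrite !ffunE; apply: inordK; rewrite ltnS. by move: (le_msize a1 p); rewrite {1}ffunE.
rewrite (bigD1 c0) /=; last by rewrite fc0 andbT; apply/forallP.
rewrite (eq_bigl (fun c => mle (fv c) a1 && (fv c != a1))); last first.
  move=> c; rewrite andbT; congr (_ && _); apply/idP/idP => /eqP H; apply/eqP => E; apply: H.
    by apply: fv_inj; rewrite fc0.
  by rewrite E fc0.
rewrite fc0 mbinom_diag EX0 !mulr1 {1}(kappa_rec l r one a1).
rewrite subrK -(@factorEx R n l r one S a1 a2 hS (part1_sub he) (part2_sub he)) -part_add.
by rewrite subrr.
Qed.

Lemma madj_sym n (a : midx n) : symmetric (madj a).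
Proof.
move=> i j; rewrite /madj; apply/existsP/existsP => -[p hp]; exists p; by rewrite orbC.
Qed.

Lemma madj_edge n (a : midx n) p : (0 < a p)%N -> madj a (\val p).1 (\val p).2.
Proof. by move=> hp; apply/existsP; exists p; rewrite hp !eqxx. Qed.

Theorem mainTheorem5 (R : realFieldType) (n : nat) (hn : (0 < n)%N)
  (lambda rho : R) (hl : 0 <= lambda) (hr0 : 0 < rho) (hr1 : rho < 1)
  (a : midx n) :
  (* some edge of alpha lies in a component not containing vertex 1 *)
  ((exists p : pairs n, (0 < a p)%N /\ ~~ connect (madj a) (val p).1 (Ordinal hn)) ->
     kappa lambda rho (Ordinal hn) a = 0)
  /\
  (* in particular: alpha disconnected (two edges in different components) *)
  ((exists p q : pairs n, [/\ (0 < a p)%N, (0 < a q)%N &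
        ~~ connect (madj a) (val p).1 (val q).1]) ->
     kappa lambda rho (Ordinal hn) a = 0).
Proof.
set o := Ordinal hn.
pose S := [set i | connect (madj a) i o].
have hS : o \in S by rewrite inE connect0.
have csym : connect_sym (madj a) by apply: sym_connect_sym; exact: madj_sym.
have he : edgeok S a.
  move=> p hp; rewrite !inE; apply/idP/idP => h.
    by apply: connect_trans h; rewrite csym; apply: connect1; exact: madj_edge.
  by apply: connect_trans h; apply: connect1; exact: madj_edge.
have part1 : (exists p : pairs n, (0 < a p)%N /\ ~~ connect (madj a) (val p).1 o) ->
     kappa lambda rho o a = 0.
  case=> p [hp hc]; apply: (main_split _ _ hS he).
  by exists p; rewrite hp inE.
split=> //.
case=> p [q [hp hq hpq]].
case: (boolP (connect (madj a) (val p).1 o)) => hpo; last by apply: part1; exists p.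
apply: part1; exists q; split=> //; apply: contra hpq => hqo.
by apply: connect_trans hpo _; rewrite csym.
Qed.
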